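(* Let $\rho<r<1$. If $\mathcal{D},\mathcal{D}'\in\mathcal{M}$ and $\lambda,\lambda'>0$ satisfy $\mathcal{R}_r\mathcal{D}=\lambda\mathcal{D}$ and $\mathcal{R}_r\mathcal{D}'=\lambda'\mathcal{D}'$, then $\lambda=\lambda'$.
   Context: Let $q_0=(\tfrac12,\tfrac{\sqrt3}{2})$, $q_1=(0,0)$, $q_2=(1,0)$, $\rho=\frac{\sqrt5-1}{2}$, $F_0(x)=\rho^2(x-q_0)+q_0$, $F_1(x)=\rho(x-q_1)+q_1$, $F_2(x)=\rho(x-q_2)+q_2$. For a finite word $w$ over $\{0,1,2\}$, $|w|$ is its length and $F_w=F_{w_1}\circ\cdots\circ F_{w_{|w|}}$. $W_1$ is a set of words of the form $w_1\cdots w_n0$ ($n\ge0$, $w_i\in\{1,2\}$) containing exactly one word for each distinct map $F_w$ of this form. $V_0=\{q_0,q_1,q_2\}$, $V_1=\bigcup_{w\in W_1}F_wV_0$, $\bar V_1$ its closure. $\mathcal{M}$ is the set of forms $\mathcal{D}(f,g)=\frac12\sum_{i,j}a_{ij}(f(q_i)-f(q_j))(g(q_i)-g(q_j))$ on functions on $V_0$ with $(a_{ij})$ symmetric, $a_{ii}=0$, $a_{ij}\ge0$ and irreducible. $\Psi_r\mathcal{D}(f,g)=\sum_{w\in W_1}r^{-|w|+1}\mathcal{D}(f\circ F_w,g\circ F_w)$ on $\mathrm{Dom}(\Psi_r\mathcal{D})=\{f:V_1\to\mathbb{R}:\Psi_r\mathcal{D}(f,f)<\infty\}$, and for $\rho<r<1$,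 $\mathcal{R}_r\mathcal{D}(u)=\inf\{\Psi_r\mathcal{D}(f):f\in\mathrm{Dom}(\Psi_r\mathcal{D}),f|_{V_0}=u\}$ for $u:V_0\to\mathbb{R}$. *)

(* Defs.v *)
From HB Require Import structures.
From mathcomp Require Import all_boot all_order all_algebra.
From mathcomp Require Import all_classical all_reals all_analysis.
Import numFieldNormedType.Exports.

Import Order.TTheory GRing.Theory Num.Theory.
Local Open Scope classical_set_scope.
Local Open Scope ring_scope.

Section Defs.
Variable R : realType.

Local Notation point := (R * R)%type.

Definition rho : R := (Num.sqrt 5 - 1) / 2.

Definition q (i : 'I_3) : point :=
  match val i with
  | 0%N => (1/2, Num.sqrt 3 / 2)
  | 1%N => (0, 0)
  | _ => (1, 0)
  end.

Definition ratio (i : 'I_3) : R := if val i == 0%N then rho ^+ 2 else rho.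

Definition F (i : 'I_3) (x : point) : point :=
  (ratio i * (x.1 - (q i).1) + (q i).1, ratio i * (x.2 - (q i).2) + (q i).2).

Definition Fw (w : seq 'I_3) : point -> point :=
  foldr (fun i g => F i \o g) id w.

Definition good_word (w : seq 'I_3) : Prop :=
  exists s : seq 'I_3, all (fun i => i != ord0) s /\ w = rcons s ord0.

Definition W1_spec (W1 : set (seq 'I_3)) : Prop :=
  [/\ (forall w, W1 w -> good_word w),
      (forall w, good_word w -> exists2 w', W1 w' & Fw w' = Fw w) &
      (forall w w', W1 w -> W1 w' -> Fw w = Fw w' -> w = w')].

Definition V1 (W1 : set (seq 'I_3)) : set point :=
  [set x | exists w, W1 w /\ exists i : 'I_3, x = Fw w (q i)].

Definition Dform (a : 'M[R]_3) (f g : 'I_3 -> R) : R :=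
  2^-1 * \sum_(i < 3) \sum_(j < 3) a i j * (f i - f j) * (g i - g j).

Definition inM (a : 'M[R]_3) : Prop :=
  [/\ (forall i j, a i j = a j i),
      (forall i, a i i = 0),
      (forall i j, 0 <= a i j) &
      (forall S : {set 'I_3}, S != finset.set0 -> S != [set: 'I_3]%SET ->
         exists i j, [/\ i \in S, j \notin S & 0 < a i j])].

Definition Psi (W1 : set (seq 'I_3)) (r : R) (a : 'M[R]_3) (f : point -> R)
  : \bar R :=
  (\esum_(w in W1)
     ((r ^- (size w).-1) * Dform a (fun i => f (Fw w (q i)))
                                   (fun i => f (Fw w (q i))))%:E)%E.

(* f|_{V_0} = u : the values of f on V_1 tend to u(q_i) at q_i (within V_1);
   this is f(q_i) = u_i when q_i is in V_1 *)
Definition boundary (W1 : set (seq 'I_3)) (f : point -> R) (u : 'I_3 -> R)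
  : Prop :=
  forall i : 'I_3, f @ within (V1 W1) (nbhs (q i)) --> u i.

Definition RR (W1 : set (seq 'I_3)) (r : R) (a : 'M[R]_3) (u : 'I_3 -> R)
  : \bar R :=
  ereal_inf [set Psi W1 r a f | f in
              [set f : point -> R | (Psi W1 r a f < +oo)%E /\ boundary W1 f u]].

End Defs.

(* Main.v *)
Require Import Defs.
From HB Require Import structures.
From mathcomp Require Import all_boot all_order all_algebra.
From mathcomp Require Import all_classical all_reals all_analysis.
From mathcomp Require Import ring lra.
Import numFieldNormedType.Exports.
Import Order.TTheory GRing.Theory Num.Theory.
Local Open Scope classical_set_scope.
Local Open Scope ring_scope.

Section H.
Variable R : realType.
Definition o0 : 'I_3 := ord0.
Definition o1 : 'I_3 := Ordinal (isT : (1 < 3)%N).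
Definition o2 : 'I_3 := Ordinal (isT : (2 < 3)%N).

Lemma sum3 (F : 'I_3 -> R) : \sum_(i < 3) F i = F o0 + F o1 + F o2.
Proof.
rewrite !big_ord_recr big_ord0 /= add0r.
by congr (F _ + F _ + F _); apply/val_inj.
Qed.

Lemma Dform3 (a : 'M[R]_3) u : inM R a ->
  Dform R a u u = a o0 o1 * (u o0 - u o1)^+2 + a o0 o2 * (u o0 - u o2)^+2
     + a o1 o2 * (u o1 - u o2)^+2.
Proof.
case=> Hs Hd _ _; rewrite /Dform !sum3 (Hs o1 o0) (Hs o2 o0) (Hs o2 o1) !Hd.
by field.
Qed.

Lemma Dform_ge0 (a : 'M[R]_3) u : inM R a -> 0 <= Dform R a u u.
Proof.
move=> H; rewrite Dform3 //; case: H => _ _ Hp _.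
by rewrite !addr_ge0 // mulr_ge0 // sqr_ge0.
Qed.

Lemma invS0 : (finset.set1 o0) != finset.set0 /\ (finset.set1 o0) != [set: 'I_3]%SET.
Proof.
split; first by apply/set0Pn; exists o0; rewrite finset.in_set1.
apply/eqP => h; have : o1 \in (finset.set1 o0) by rewrite h finset.in_setT.
by rewrite finset.in_set1.
Qed.

Local Open Scope ereal_scope.
Lemma Psi_scale W1 (r c : R) (a a' : 'M[R]_3) (f : (R*R)%type -> R) :
  (0 < r)%R -> (0 < c)%R -> inM R a' ->
  (forall g : 'I_3 -> R, c * Dform R a' g g <= Dform R a g g)%R ->
  c%:E * Psi R W1 r a' f <= Psi R W1 r a f.
Proof.
move=> r0 c0 Ha' Hc; rewrite /Psi /esum -ereal_sup_pZl //.
apply: ge_ereal_sup => _ [_ [A HA <-] <-].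
rewrite ge0_mule_fsumr; last first.
  by move=> w; rewrite lee_fin mulr_ge0 ?Dform_ge0 // invr_ge0 exprn_ge0 // ltW.
apply: esum_ge; exists A => //; apply: lee_fsum; first by case: HA.
move=> w _; rewrite -EFinM lee_fin mulrCA ler_wpM2l //.
by rewrite invr_ge0 exprn_ge0 // ltW.
Qed.

Lemma RR_mono W1 (r c : R) (a a' : 'M[R]_3) (lam' : R) (u : 'I_3 -> R) :
  (0 < r)%R -> (0 < c)%R -> inM R a' ->
  (forall g : 'I_3 -> R, c * Dform R a' g g <= Dform R a g g)%R ->
  (forall u : 'I_3 -> R, RR R W1 r a' u = (lam' * Dform R a' u u)%:E) ->
  (c * (lam' * Dform R a' u u))%:E <= RR R W1 r a u.
Proof.
move=> r0 c0 Ha' Hc Hr'; apply/ereal_infP => _ [f [Hf Hb] <-].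
have H1 := Psi_scale W1 r c a a' f r0 c0 Ha' Hc.
have Hfin : Psi R W1 r a' f < +oo.
  move: H1; case E: (Psi R W1 r a' f) => [x| |] //.
    by rewrite ltry.
  rewrite muleC gt0_mulye ?lte_fin // => /(le_lt_trans)/(_ Hf).
  by rewrite ltxx.
have H2 : (lam' * Dform R a' u u)%:E <= Psi R W1 r a' f.
  by rewrite -Hr'; apply: ereal_inf_lbound; exists f.
rewrite EFinM; apply: le_trans H1; apply: lee_wpmul2l => //.
by rewrite lee_fin ltW.
Qed.
Local Close Scope ereal_scope.

Lemma ord3 (j : 'I_3) : j = o0 \/ j = o1 \/ j = o2.
Proof.
case: j => [[|[|[|n]]] Hj]; [left|right;left|right;right|]; try exact/val_inj.
by [].
Qed.

Lemma irr1 (a : 'M[R]_3) (k : 'I_3) : inM R a -> exists j, j != k /\ 0 < a k j.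
Proof.
case=> _ _ _ Hirr.
have [S0 ST] : finset.set1 k != finset.set0 /\ finset.set1 k != [set: 'I_3]%SET.
  split; first by apply/set0Pn; exists k; rewrite finset.in_set1.
  apply/eqP => h.
  have [j Hj] : exists j : 'I_3, j != k.
    by case: (ord3 k) => [->|[->|->]]; [exists o1|exists o0|exists o0].
  have : j \in finset.set1 k by rewrite h finset.in_setT.
  by rewrite finset.in_set1 (negbTE Hj).
have [i [j [Hi Hj H]]] := Hirr _ S0 ST.
move: Hi Hj H; rewrite !finset.in_set1 => /eqP -> Hj H.
by exists j.
Qed.

Lemma irr3 (a : 'M[R]_3) : inM R a ->
  [/\ 0 < a o0 o1 \/ 0 < a o0 o2, 0 < a o0 o1 \/ 0 < a o1 o2 &
      0 < a o0 o2 \/ 0 < a o1 o2].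
Proof.
move=> Ha; have Hs : forall i j, a i j = a j i by case: Ha.
have Hd : forall i, a i i = 0 by case: Ha.
split.
- have [j [Hj H]] := irr1 a o0 Ha.
  by case: (ord3 j) Hj H => [->|[->|->]] //; [left|right].
- have [j [Hj H]] := irr1 a o1 Ha.
  by case: (ord3 j) Hj H => [->|[->|->]] //; rewrite ?(Hs o1 o0); [left|right].
- have [j [Hj H]] := irr1 a o2 Ha.
  by case: (ord3 j) Hj H => [->|[->|->]] //; rewrite ?(Hs o2 o0) ?(Hs o2 o1); [left|right].
Qed.

Lemma lowb (p q s X Y Z m : R) : 0 < m -> m <= p -> m <= q -> 0 <= X -> 0 <= Y ->
  0 <= Z -> 0 <= s -> Z <= 2 * X + 2 * Y -> m / 3 * (X + Y + Z) <= p * X + q * Y + s * Z.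
Proof. move=> *; nra. Qed.

Lemma tri (x y z : R) : [/\ (y - z)^+2 <= 2 * (x - y)^+2 + 2 * (x - z)^+2,
  (x - y)^+2 <= 2 * (x - z)^+2 + 2 * (y - z)^+2 &
  (x - z)^+2 <= 2 * (x - y)^+2 + 2 * (y - z)^+2].
Proof.
split.
- have := sqr_ge0 (2 * x - y - z); nra.
- have := sqr_ge0 (2 * z - y - x); nra.
- have := sqr_ge0 (2 * y - x - z); nra.
Qed.

Lemma lower (a : 'M[R]_3) : inM R a -> exists2 m, 0 < m & forall u : 'I_3 -> R,
  m * ((u o0 - u o1)^+2 + (u o0 - u o2)^+2 + (u o1 - u o2)^+2) <= Dform R a u u.
Proof.
move=> Ha; have Hp : forall i j, 0 <= a i j by case: Ha.
have [H1 H2 H3] := irr3 a Ha.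
have Hp0 := Hp o0 o1; have Hq0 := Hp o0 o2; have Hs0 := Hp o1 o2.
set p := a o0 o1 in H1 H2 H3 Hp0 *; set q := a o0 o2 in H1 H2 H3 Hq0 *;
set s := a o1 o2 in H1 H2 H3 Hs0 *.
have [Hq|Hq] := ltP 0 q; have [Hpp|Hpp] := ltP 0 p.
- exists (Num.min p q / 3); first by rewrite divr_gt0 // lt_min Hpp Hq.
  move=> u; rewrite Dform3 //; have [T1 T2 T3] := tri (u o0) (u o1) (u o2).
  apply: lowb; rewrite ?sqr_ge0 ?ge_min ?lexx ?orbT ?lt_min ?Hpp ?Hq //.
- have Hs : 0 < s by case: H2 => // h; move: Hpp; rewrite leNgt h.
  exists (Num.min q s / 3); first by rewrite divr_gt0 // lt_min Hs Hq.
  move=> u; rewrite Dform3 //; have [T1 T2 T3] := tri (u o0) (u o1) (u o2).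
  have := @lowb q s p ((u o0 - u o2)^+2) ((u o1 - u o2)^+2) ((u o0 - u o1)^+2)
    (Num.min q s).
  rewrite ?sqr_ge0 ?ge_min ?lexx ?orbT ?lt_min ?Hs ?Hq //= => /(_ isT isT isT isT isT isT Hp0 T2).
  move=> h; have eqle : forall x y : R, x = y -> x <= y by move=> x y ->.
  apply: le_trans (le_trans _ h) _; apply: eqle; [congr (_ * _) | rewrite /p /q /s]; lra.
- have Hs : 0 < s by case: H3 => // h; move: Hq; rewrite leNgt h.
  exists (Num.min p s / 3); first by rewrite divr_gt0 // lt_min Hs Hpp.
  move=> u; rewrite Dform3 //; have [T1 T2 T3] := tri (u o0) (u o1) (u o2).
  have := @lowb p s q ((u o0 - u o1)^+2) ((u o1 - u o2)^+2) ((u o0 - u o2)^+2)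
    (Num.min p s).
  rewrite ?sqr_ge0 ?ge_min ?lexx ?orbT ?lt_min ?Hs ?Hpp //= => /(_ isT isT isT isT isT isT Hq0 T3).
  move=> h; have eqle : forall x y : R, x = y -> x <= y by move=> x y ->.
  apply: le_trans (le_trans _ h) _; apply: eqle; [congr (_ * _) | rewrite /p /q /s]; lra.
- by case: H1 => h; [move: Hpp|move: Hq]; rewrite leNgt h.
Qed.

Lemma upper (a : 'M[R]_3) : inM R a -> exists2 M, 0 < M & forall u : 'I_3 -> R,
  Dform R a u u <= M * ((u o0 - u o1)^+2 + (u o0 - u o2)^+2 + (u o1 - u o2)^+2).
Proof.
move=> Ha; have Hp : forall i j, 0 <= a i j by case: Ha.
have Hp0 := Hp o0 o1; have Hq0 := Hp o0 o2; have Hs0 := Hp o1 o2.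
exists (a o0 o1 + a o0 o2 + a o1 o2 + 1); first lra.
move=> u; rewrite Dform3 //.
have := sqr_ge0 (u o0 - u o1); have := sqr_ge0 (u o0 - u o2);
have := sqr_ge0 (u o1 - u o2); nra.
Qed.

Lemma rho_gt0 : 0 < rho R.
Proof.
have h : Num.sqrt (1 : R) < Num.sqrt 5 by rewrite ltr_sqrt //; lra.
rewrite sqrtr1 in h; rewrite /rho; lra.
Qed.

Lemma bern (k : R) n : 1 <= k -> 1 + n%:R * (k - 1) <= k ^+ n.
Proof.
move=> k1; elim: n => [|n IH]; first by rewrite mul0r addr0 expr0.
rewrite exprS -natr1.
have h1 : 1 <= k ^+ n by rewrite exprn_ege1.
nra.
Qed.

Lemma half {W1} {r : R} {a a' : 'M[R]_3} {lam lam' : R} :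
  0 < r -> inM R a -> inM R a' -> 0 < lam -> 0 < lam' ->
  (forall u : 'I_3 -> R, RR R W1 r a u = (lam * Dform R a u u)%:E) ->
  (forall u : 'I_3 -> R, RR R W1 r a' u = (lam' * Dform R a' u u)%:E) ->
  lam' <= lam.
Proof.
move=> r0 Ha Ha' l0 l0' Hr Hr'.
pose S c := forall g : 'I_3 -> R, c * Dform R a' g g <= Dform R a g g.
have [m m0 Hm] := lower a Ha.
have [M M0 HM] := upper a' Ha'.
have S0 : S (m / M).
  move=> g; apply: le_trans (Hm g); rewrite -mulrA; apply: ler_wpM2l.
    exact: ltW.
  by rewrite ler_pdivrMl.
have Sstep : forall c, 0 < c -> S c -> S (c * (lam' / lam)).
  move=> c c0 Sc g; have := RR_mono W1 r c a a' lam' g r0 c0 Ha' Sc Hr'.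
  rewrite Hr lee_fin => h.
  have -> : c * (lam' / lam) * Dform R a' g g = c * (lam' * Dform R a' g g) / lam.
    by field; rewrite lt0r_neq0.
  by rewrite ler_pdivrMr // [Dform R a g g * _]mulrC.
pose u0 : 'I_3 -> R := fun i => if i == o0 then 1 else 0.
have Du0 : 0 < Dform R a' u0 u0.
  rewrite Dform3 // /u0 /=.
  have [H1 _ _] := irr3 a' Ha'.
  have Hp : forall i j, 0 <= a' i j by case: Ha'.
  have := Hp o0 o1; have := Hp o0 o2; have := Hp o1 o2.
  rewrite subr0 subrr expr0n /= expr1n !mulr1 mulr0 addr0.
  case: H1; lra.
have Sb : forall c, S c -> c <= Dform R a u0 u0 / Dform R a' u0 u0.
  by move=> c Sc; rewrite ler_pdivlMr //; exact: Sc.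
have c00 : 0 < m / M by rewrite divr_gt0.
have Sn : forall n, S (m / M * (lam' / lam) ^+ n).
  elim=> [|n IH]; first by rewrite expr0 mulr1.
  rewrite exprS mulrCA mulrC; apply: Sstep; last first.
    exact: IH.
  by rewrite mulr_gt0 // exprn_gt0 // divr_gt0.
rewrite leNgt; apply/negP => hlt.
set k := lam' / lam.
have k1 : 1 < k by rewrite /k ltr_pdivlMr // mul1r.
set B := Dform R a u0 u0 / Dform R a' u0 u0.
set c0 := m / M.
have Hn : forall n : nat, c0 * (1 + n%:R * (k - 1)) <= B.
  move=> n; apply: le_trans (Sb _ (Sn n)).
  by apply: ler_wpM2l; [exact: ltW | exact: bern (ltW k1)].
have hB : 0 <= B / (c0 * (k - 1)).
  apply: divr_ge0; first by rewrite /B divr_ge0 ?Dform_ge0 // ltW.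
  by rewrite mulr_ge0 // ltW // subr_gt0.
have := archi_boundP hB.
set N := Num.bound _ => hN.
have := Hn N.
rewrite ltr_pdivrMr ?mulr_gt0 ?subr_gt0 // in hN.
move=> h; have e : c0 * (1 + N%:R * (k - 1)) = c0 + N%:R * (c0 * (k - 1)) by rewrite mulrDr mulr1 mulrCA.
have c0p : 0 < c0 by rewrite /c0 divr_gt0.
lra.
by rewrite invr_gt0.
Qed.
End H.

Theorem lemma5p2 (R : realType) (r : R) (W1 : set (seq 'I_3))
  (a a' : 'M[R]_3) (lam lam' : R) :
  rho R < r -> r < 1 -> W1_spec R W1 ->
  inM R a -> inM R a' -> 0 < lam -> 0 < lam' ->
  (forall u : 'I_3 -> R, RR R W1 r a u = (lam * Dform R a u u)%:E) ->
  (forall u : 'I_3 -> R, RR R W1 r a' u = (lam' * Dform R a' u u)%:E) ->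
  lam = lam'.
Proof.
move=> hr _ _ Ha Ha' l0 l0' Hr Hr'.
have r0 : 0 < r by apply: lt_trans hr; exact: rho_gt0.
apply/eqP; rewrite eq_le.
by rewrite (half R (W1:=W1) r0 Ha' Ha l0' l0 Hr' Hr) (half R (W1:=W1) r0 Ha Ha' l0 l0' Hr Hr').
Qed.
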